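(* Let $G'$ be an identifiable graph, $v$ a vertex of $G'$ and $S$ a $\Delta$-star with $\Delta\ge 3$, and let $G=G'\rhd_v S$. Then $G$ is identifiable and $\gamma^{\rm ID}(G) \le \gamma^{\rm ID}(G') + \Delta - 1$.
   Context: A graph is identifiable if it has no two distinct vertices with the same closed neighborhood $N[\cdot]$. An identifying code of $G$ is a set $C\subseteq V(G)$ such that every vertex $v$ has $N[v]\cap C\neq\emptyset$ and for all distinct $u,v$, $N[u]\cap C \ne N[v]\cap C$; $\gamma^{\rm ID}(G)$ is its minimum size. A $\Delta$-star is $K_{1,\Delta}$. For a graph $G'$, a vertex $v$ of $G'$ and a star $S$, $G'\rhd_v S$ is the graph obtained from the disjoint union of $G'$ and $S$ by identifying $v$ with a leaf of $S$. *)

(* Defs.v *)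
From mathcomp Require Import all_boot.
Set Implicit Arguments. Unset Strict Implicit. Unset Printing Implicit Defensive.

Section Defs.
Variable T : finType.
Implicit Types (e : rel T).

Definition simple_graph e : Prop := symmetric e /\ irreflexive e.

Definition cnbhd e (x : T) : {set T} := [set y | (y == x) || e x y].

Definition identifiable e : Prop :=
  forall x y : T, cnbhd e x = cnbhd e y -> x = y.

Definition is_idcode e (C : {set T}) : bool :=
  [forall x, cnbhd e x :&: C != set0] &&
  [forall x, forall y, (x != y) ==> (cnbhd e x :&: C != cnbhd e y :&: C)].

(* gamma^ID: minimum size of an identifying code (every code has size
   <= #|T|, so the default #|T| is only reached when no code exists,
   i.e. when the graph is not identifiable). *)
Definition gammaID e : nat :=
  \big[minn/#|T|]_(C : {set T} | is_idcode e C) #|C|.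
End Defs.

(* G' |>_v S for S = K_{1,D}: vertices of G' plus the centre (inr None)
   and the D-1 leaves of S other than the one identified with v
   (inr (Some i), i : 'I_(D-1)). *)
Definition star_attach (T : finType) (e : rel T) (v : T) (k : nat)
  : rel (T + option 'I_k) :=
  fun x y =>
    match x, y with
    | inl a, inl b => e a b
    | inl a, inr None => a == v
    | inr None, inl a => a == v
    | inr None, inr (Some _) => true
    | inr (Some _), inr None => true
    | _, _ => false
    end.
Arguments star_attach {T} e v k.

(* Main.v *)
Require Import Defs.
From mathcomp Require Import all_boot.

Lemma sep_neq (U : finType) (A B C : {set U}) z :
  z \in C -> z \in A -> z \notin B -> A :&: C != B :&: C.
Proof.
move=> zC zA zB; apply/eqP => H.
have : z \in A :&: C by rewrite inE zA zC.
by rewrite H inE (negbTE zB).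
Qed.

Lemma sep_neq2 (U : finType) (A B C : {set U}) z :
  z \in C -> z \notin A -> z \in B -> A :&: C != B :&: C.
Proof. by move=> zC zA zB; rewrite eq_sym; apply: sep_neq zC zB zA. Qed.

Section Construction.
Variables (T : finType) (e : rel T) (v : T) (C : {set T}) (k : nat).
Hypothesis hC : is_idcode e C.
Hypothesis hk : 1 < k.

Definition Cg : {set T + option 'I_k} :=
  [set x | match x with inl a => a \in C | inr None => false | inr (Some _) => true end].

Lemma Cg_card : #|Cg| <= #|C| + k.
Proof.
have -> : Cg = (inl @: C) :|: [set inr (Some i) | i : 'I_k].
  apply/setP => [[a|[i|]]]; rewrite !inE.
  - rewrite mem_imset; last by move=> ? ? [].
    have /negbTE -> : inl a \notin [set inr (Some i) | i : 'I_k].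
      by apply/imsetP => [[i _]].
    by rewrite orbF.
  - by apply/esym/orP; right; apply/imsetP; exists i.
  - apply/esym/negbTE; rewrite negb_or; apply/andP; split; apply/imsetP.
      by case=> ? _.
    by case=> ? _.
rewrite cardsU; apply: leq_trans (leq_subr _ _) _.
apply: leq_add; first exact: leq_imset_card.
by apply: leq_trans (leq_imset_card _ _) _; rewrite card_ord.
Qed.

Lemma Cg_code : is_idcode (star_attach e v k) Cg.
Proof.
pose i0 : 'I_k := Ordinal (ltnW hk).
case/andP: hC => /forallP dom /forallP sepC.
apply/andP; split; apply/forallP.
- case=> [a|[i|]].
  + case/set0Pn: (dom a) => z; rewrite !inE => /andP[H1 H2].
    by apply/set0Pn; exists (inl z); rewrite /cnbhd !inE /= H1 H2.
  + by apply/set0Pn; exists (inr (Some i)); rewrite /cnbhd !inE /= eqxx.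
  + by apply/set0Pn; exists (inr (Some i0)); rewrite /cnbhd !inE /=.
- move=> x; apply/forallP => y; apply/implyP => nxy.
  case: x y nxy => [a|[i|]] [b|[j|]] nxy.
  + apply/eqP => H; have := sepC a; move/forallP/(_ b)/implyP/(_ nxy)/eqP; apply.
    apply/setP => z; move/setP/(_ (inl z)): H.
    by rewrite /cnbhd !inE /=.
  + by apply: (@sep_neq2 _ _ _ _ (inr (Some j))); rewrite /cnbhd !inE /= ?eqxx.
  + by apply: (@sep_neq2 _ _ _ _ (inr (Some i0))); rewrite /cnbhd !inE /= ?eqxx.
  + by apply: (@sep_neq _ _ _ _ (inr (Some i))); rewrite /cnbhd !inE /= ?eqxx.
  + apply: (@sep_neq _ _ _ _ (inr (Some i))); rewrite /cnbhd !inE /= ?eqxx //.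
    by rewrite negb_or andbT; apply: contra nxy => /eqP ->.
  + pose j : 'I_k := if val i == 0 then Ordinal hk else i0.
    have hj : j != i.
      rewrite /j; case: (val i =P 0) => h; apply/eqP => E; rewrite -E in h; first by [].
      by apply: h.
    apply: (@sep_neq2 _ _ _ _ (inr (Some j))); rewrite /cnbhd !inE /= //.
    by rewrite negb_or andbT; apply: contra hj => /eqP [->].
  + by apply: (@sep_neq _ _ _ _ (inr (Some i0))); rewrite /cnbhd !inE /= ?eqxx.
  + pose i := if val j == 0 then Ordinal hk else i0.
    have hj : i != j.
      rewrite /i; case: (val j =P 0) => h; apply/eqP => E; rewrite -E in h; first by [].
      by apply: h.
    apply: (@sep_neq _ _ _ _ (inr (Some i))); rewrite /cnbhd !inE /= //.
    by rewrite negb_or andbT; apply: contra hj => /eqP [->].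
  + by rewrite eqxx in nxy.
Qed.
End Construction.

Lemma gamma_le (U : finType) (r : rel U) (C : {set U}) :
  is_idcode r C -> gammaID r <= #|C|.
Proof.
move=> h; rewrite /gammaID.
have : C \in index_enum (Finite.clone _ {set U}) by rewrite mem_index_enum.
elim: (index_enum _) => [//|a s IH]; rewrite big_cons inE.
case/orP => [/eqP <-|/IH H]; first by rewrite h geq_minl.
by case: ifP => // _; rewrite geq_min H orbT.
Qed.

Lemma gamma_ex (U : finType) (r : rel U) :
  identifiable r -> exists2 C, is_idcode r C & #|C| <= gammaID r.
Proof.
move=> hid; rewrite /gammaID.
apply: (big_ind (fun n => exists2 C, is_idcode r C & #|C| <= n)).
- exists setT; last by rewrite cardsT.
  apply/andP; split; apply/forallP => x.
    by apply/set0Pn; exists x; rewrite !inE eqxx.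
  apply/forallP => y; apply/implyP => nxy; rewrite !setIT.
  by apply: contra nxy => /eqP /hid ->.
- move=> a b [C1 h1 l1] [C2 h2 l2]; rewrite /minn; case: ifP => _.
    by exists C1.
  by exists C2.
- by move=> C hC; exists C.
Qed.

Theorem mainTheorem4 (T : finType) (e : rel T) (v : T) (D : nat) :
  simple_graph e -> identifiable e -> 3 <= D ->
  identifiable (star_attach e v D.-1) /\
  gammaID (star_attach e v D.-1) <= gammaID e + D - 1.
Proof.
move=> _ hid hD.
have hk : 1 < D.-1 by case: D hD => [|[|[|D]]].
case: (@gamma_ex _ _ hid) => C hC lC.
have code := @Cg_code _ _ v _ _ hC hk.
split.
- move=> x y H; apply/eqP/negPn/negP => nxy.
  case/andP: code => _ /forallP /(_ x) /forallP /(_ y) /implyP /(_ nxy).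
  by rewrite H eqxx.
- apply: leq_trans (@gamma_le _ _ _ code) _.
  apply: leq_trans (@Cg_card T C D.-1) _.
  have -> : gammaID e + D - 1 = gammaID e + D.-1.
    by case: D hD {hk code} => // D _; rewrite addnS subn1.
  by rewrite leq_add2r.
Qed.
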